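(* Let $n\ge 1$ and $a\ge 2$ be integers and $r>0$. For $j\in\mathbb Z$ let $P_j$ be the point $\bigl(r\cos(2\pi j/n),\, r\sin(2\pi j/n)\bigr)$ on the circle of radius $r$ centered at the origin (so $P_j$ depends only on $j \bmod n$, and $P_0,\dots,P_{n-1}$ are $n$ equally spaced points on the circle). Then \[\sum_{k=0}^{n-1} |P_k P_{ak}| \;=\; 2rg\cot\left(\frac{\pi g}{2n}\right),\] where $|P_kP_{ak}|$ denotes the Euclidean distance between $P_k$ and $P_{ak}$, and $g=\gcd(a-1,n)$.
   Context: The sum counts, for each $k\in\{0,1,\dots,n-1\}$, the length of the segment joining point $k$ to point $ak \bmod n$; a segment may be counted twice (once from each endpoint) and degenerate segments (when $ak\equiv k \bmod n$) have length $0$. *)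

(* Defs.v *)
From Stdlib Require Import Reals Arith.
Open Scope R_scope.

Definition Px (r : R) (n j : nat) : R := r * cos (2 * PI * INR j / INR n).
Definition Py (r : R) (n j : nat) : R := r * sin (2 * PI * INR j / INR n).

Definition dist_pts (r : R) (n i j : nat) : R :=
  sqrt ((Px r n i - Px r n j) ^ 2 + (Py r n i - Py r n j) ^ 2).

Definition cot (x : R) : R := cos x / sin x.

(* Main.v *)
Require Import Defs.
From Stdlib Require Import Reals Arith Lra Lia List Permutation.
Open Scope R_scope.

Definition lsum (l : list R) := fold_right Rplus 0 l.

Lemma lsum_app l1 l2 : lsum (l1 ++ l2) = lsum l1 + lsum l2.
Proof. induction l1; simpl; [lra| rewrite IHl1; lra]. Qed.

Lemma lsum_perm l1 l2 : Permutation l1 l2 -> lsum l1 = lsum l2.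
Proof. induction 1; simpl; lra. Qed.

Lemma lsum_scal (c : R) (f : nat -> R) l :
  lsum (map (fun k => c * f k) l) = c * lsum (map f l).
Proof. induction l; simpl; [lra| rewrite IHl; lra]. Qed.

Lemma sum_lsum f N : sum_f_R0 f N = lsum (map f (seq 0 (S N))).
Proof.
  induction N; [simpl; lra|].
  change (sum_f_R0 f (S N)) with (sum_f_R0 f N + f (S N)).
  rewrite IHN, (seq_S (S N) 0), map_app, lsum_app. simpl. lra.
Qed.

Lemma map_seq_shift (f : nat -> R) s d l :
  map f (seq (s + d) l) = map (fun k => f (k + d)%nat) (seq s l).
Proof.
  revert s; induction l; intro s; simpl; auto.
  rewrite <- IHl. f_equal.
Qed.

Lemma abs_sin_shift x q : Rabs (sin (x + INR q * PI)) = Rabs (sin x).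
Proof.
  induction q.
  - simpl; rewrite Rmult_0_l, Rplus_0_r; auto.
  - rewrite S_INR. replace (x + (INR q + 1) * PI) with ((x + INR q * PI) + PI) by ring.
    rewrite neg_sin, Rabs_Ropp; auto.
Qed.

Lemma abs_sin_mod (n' N : nat) : (0 < n')%nat ->
  Rabs (sin (PI * INR N / INR n')) = Rabs (sin (PI * INR (N mod n') / INR n')).
Proof.
  intro Hn. rewrite (Nat.div_mod_eq N n') at 1.
  rewrite plus_INR, mult_INR.
  assert (INR n' <> 0) by (apply not_0_INR; lia).
  replace (PI * (INR n' * INR (N / n') + INR (N mod n')) / INR n')
    with (PI * INR (N mod n') / INR n' + INR (N / n') * PI) by (field; auto).
  apply abs_sin_shift.
Qed.

Lemma dist_formula r x y : 0 < r ->
  sqrt ((r * cos x - r * cos y) ^ 2 + (r * sin x - r * sin y) ^ 2)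
  = 2 * r * Rabs (sin ((x - y) / 2)).
Proof.
  intro Hr.
  assert (E : (r * cos x - r * cos y) ^ 2 + (r * sin x - r * sin y) ^ 2
     = Rsqr (2 * r * sin ((x - y) / 2))).
  { assert (C : cos (x - y) = cos (2 * ((x - y) / 2))) by (f_equal; field).
    rewrite cos_2a_sin, cos_minus in C.
    pose proof (sin2_cos2 x) as Sx. pose proof (sin2_cos2 y) as Sy.
    unfold Rsqr in *. nra. }
  rewrite E, sqrt_Rsqr_abs, !Rabs_mult, (Rabs_right 2), (Rabs_right r); lra.
Qed.

Lemma mod_inj (m' n' k1 k2 : nat) : Nat.gcd m' n' = 1%nat ->
  (k1 <= k2 < n')%nat -> (m' * k1) mod n' = (m' * k2) mod n' -> k1 = k2.
Proof.
  intros Hg [H12 H2] Hm.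
  assert (Hn : n' <> 0%nat) by lia.
  pose proof (Nat.div_mod_eq (m' * k1) n') as E1.
  pose proof (Nat.div_mod_eq (m' * k2) n') as E2.
  assert (D : Nat.divide n' (m' * (k2 - k1))).
  { exists ((m' * k2) / n' - (m' * k1) / n')%nat.
    rewrite Nat.mul_sub_distr_l, Nat.mul_sub_distr_r.
    assert (m' * k1 <= m' * k2)%nat by (apply Nat.mul_le_mono_l; lia).
    rewrite (Nat.mul_comm (m' * k2 / n')), (Nat.mul_comm (m' * k1 / n')). lia. }
  apply Nat.gauss in D; [| rewrite Nat.gcd_comm; auto].
  destruct D as [z Hz]. destruct z; nia.
Qed.

Lemma perm_mod (m' n' : nat) : Nat.gcd m' n' = 1%nat -> (0 < n')%nat ->
  Permutation (map (fun k => (m' * k) mod n') (seq 0 n')) (seq 0 n').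
Proof.
  intros Hg Hn. apply NoDup_Permutation_bis.
  - apply FinFun.Injective_map_NoDup_in; [| apply seq_NoDup].
    intros x y Hx Hy Hxy. apply in_seq in Hx, Hy.
    destruct (Nat.le_gt_cases x y).
    + apply (mod_inj m' n'); auto; lia.
    + symmetry; apply (mod_inj m' n'); auto; lia.
  - rewrite length_map; lia.
  - intros x Hx. apply in_map_iff in Hx. destruct Hx as [k [<- _]].
    apply in_seq. pose proof (Nat.mod_upper_bound (m' * k) n'). lia.
Qed.

Lemma tele th N : 2 * sin (th / 2) * lsum (map (fun j => sin (INR j * th)) (seq 0 N))
  = cos (th / 2) - cos ((INR N - 1/2) * th).
Proof.
  induction N.
  - simpl. replace ((0 - 1/2) * th) with (- (th/2)) by field. rewrite cos_neg. lra.
  - rewrite (seq_S N 0), map_app, lsum_app. cbn [map lsum fold_right]. rewrite Rplus_0_r, S_INR.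
    rewrite Rmult_plus_distr_l, IHN. idtac.
    replace ((INR N - 1/2) * th) with (INR N * th - th/2) by field.
    replace ((INR N + 1 - 1/2) * th) with (INR N * th + th/2) by field.
    rewrite cos_minus, cos_plus. simpl (0 + N)%nat. ring.
Qed.

Lemma sin_sum (n' : nat) : (0 < n')%nat ->
  lsum (map (fun j => sin (PI * INR j / INR n')) (seq 0 n')) = cot (PI / (2 * INR n')).
Proof.
  intro Hn. assert (H1 : 1 <= INR n') by (apply (le_INR 1); lia).
  set (th := PI / INR n').
  assert (Hs : 0 < sin (th / 2)).
  { apply sin_gt_0; unfold th; pose proof PI_RGT_0.
    - apply Rdiv_lt_0_compat; [apply Rdiv_lt_0_compat|]; lra.
    - apply Rlt_le_trans with (PI / 1 / 1 * 1); [|].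
      + unfold Rdiv. apply Rmult_lt_reg_r with (2 * INR n'). lra.
        field_simplify; try lra. nra.
      + lra. }
  pose proof (tele th n') as T.
  replace ((INR n' - 1/2) * th) with (PI - th / 2) in T by (unfold th; field; lra).
  rewrite Rtrigo_facts.cos_pi_minus in T.
  replace (map (fun j => sin (PI * INR j / INR n')) (seq 0 n'))
    with (map (fun j => sin (INR j * th)) (seq 0 n')).
  2:{ apply map_ext; intro j; unfold th; f_equal; field; lra. }
  unfold cot. replace (PI / (2 * INR n')) with (th / 2) by (unfold th; field; lra).
  apply Rmult_eq_reg_l with (2 * sin (th / 2)); [|lra].
  rewrite T. field. lra.
Qed.

Lemma lsum_periodic (F : nat -> R) (n' : nat) :
  (forall k, F (k + n')%nat = F k) ->
  forall c, lsum (map F (seq 0 (c * n'))) = INR c * lsum (map F (seq 0 n')).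
Proof.
  intros HF.
  assert (HF' : forall c k, F (k + c * n')%nat = F k).
  { induction c; intro k. - f_equal; lia.
    - replace (k + S c * n')%nat with ((k + c * n') + n')%nat by lia. rewrite HF; auto. }
  induction c.
  - simpl. lra.
  - assert (E : (S c * n' = c * n' + n')%nat) by lia. rewrite E.
    rewrite seq_app, map_app, lsum_app, IHc, map_seq_shift.
    rewrite (map_ext (fun k => F (k + c * n')%nat) F) by (intro; apply HF').
    rewrite S_INR. lra.
Qed.

Theorem theorem1 (n a : nat) (r : R) :
  (1 <= n)%nat -> (2 <= a)%nat -> 0 < r ->
  sum_f_R0 (fun k => dist_pts r n k (a * k)) (n - 1) =
  2 * r * INR (Nat.gcd (a - 1) n) * cot (PI * INR (Nat.gcd (a - 1) n) / (2 * INR n)).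
Proof.
  intros Hn Ha Hr.
  set (m := (a - 1)%nat). set (g := Nat.gcd m n).
  assert (Hg0 : g <> 0%nat) by (unfold g; intro E; apply Nat.gcd_eq_0 in E; lia).
  destruct (Nat.gcd_divide_r m n) as [n' Hn'].
  destruct (Nat.gcd_divide_l m n) as [m' Hm'].
  fold g in Hn', Hm'.
  assert (Hcop : Nat.gcd m' n' = 1%nat).
  { pose proof (Nat.gcd_div_gcd m n g Hg0 eq_refl) as G.
    rewrite Hm', Hn', !Nat.div_mul in G; auto. }
  assert (Hn'0 : (0 < n')%nat) by nia.
  assert (Hg1 : 1 <= INR g) by (apply (le_INR 1); lia).
  assert (Hn1 : 1 <= INR n') by (apply (le_INR 1); lia).
  set (h := fun t : nat => sin (PI * INR t / INR n')).
  rewrite sum_lsum. replace (S (n - 1)) with n by lia.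
  rewrite (map_ext (fun k => dist_pts r n k (a * k))
             (fun k => 2 * r * h ((m' * k) mod n'))).
  2:{ intro k. unfold dist_pts, Px, Py. rewrite dist_formula by auto.
      f_equal. unfold h.
      rewrite <- (Rabs_right (sin (PI * INR ((m' * k) mod n') / INR n'))).
      2:{ apply Rle_ge, sin_ge_0.
          - apply Rmult_le_pos; [apply Rmult_le_pos; [pose proof PI_RGT_0; lra| apply pos_INR]|].
            apply Rlt_le, Rinv_0_lt_compat; lra.
          - pose proof (Nat.mod_upper_bound (m' * k) n') as U.
            assert (INR ((m' * k) mod n') <= INR n') by (apply le_INR; lia).
            pose proof PI_RGT_0.
            apply Rmult_le_reg_r with (INR n'); [lra|].
            field_simplify; try lra. nra. }
      rewrite <- abs_sin_mod by auto.
      assert (Ea : a = (m' * g + 1)%nat) by (unfold m in Hm'; lia).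
      rewrite Ea, Hn'. rewrite !mult_INR, plus_INR, mult_INR.
      replace ((2 * PI * INR k / (INR n' * INR g) -
                2 * PI * ((INR m' * INR g + INR 1) * INR k) / (INR n' * INR g)) / 2)
        with (- (PI * (INR m' * INR k) / INR n')) by (simpl; field; lra).
      rewrite sin_neg, Rabs_Ropp. auto. }
  rewrite (lsum_scal (2 * r) (fun k => h ((m' * k) mod n'))).
  rewrite Hn', (Nat.mul_comm n' g), (lsum_periodic (fun k => h ((m' * k) mod n')) n').
  2:{ intro k. f_equal. rewrite Nat.mul_add_distr_l, Nat.mul_comm with m' n'.
      rewrite Nat.mul_comm with n' m'. apply Nat.Div0.mod_add. }
  rewrite <- (map_map (fun k => (m' * k) mod n') h).
  rewrite (lsum_perm _ _ (Permutation_map h (perm_mod m' n' Hcop Hn'0))).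
  unfold h. rewrite sin_sum by auto.
  rewrite mult_INR.
  replace (PI * INR g / (2 * (INR g * INR n'))) with (PI / (2 * INR n')) by (field; lra).
  ring.
Qed.
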